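(* Let $(X,d)$ be a locally compact, second countable metric space. Let $(f_\lambda)$ be a sequence in $\Gamma(X)$ and $f,g\in C_{od}(X,X)$ such that $(f_\lambda)$ $\tau_{cc}$-converges to $f$, $(f_\lambda^{-1})$ $\tau_{cc}$-converges to $g$, $\mathrm{im}(f)\subseteq\mathrm{dom}(g)$ and $\mathrm{im}(g)\subseteq\mathrm{dom}(f)$. Then $f$ and $g$ are homeomorphisms (onto their images) and $f^{-1}=g$.
   Context: $\Gamma(X)$ denotes the set of homeomorphisms $f:\mathrm{dom}(f)\to\mathrm{im}(f)$ between open subsets of $X$ (including the empty function). $C_{od}(X,X)$ is the set of continuous maps $f:\mathrm{dom}(f)\to X$ with $\mathrm{dom}(f)$ open in $X$. A sequence $(h_\lambda)$ in $C_{od}(X,X)$ $\tau_{cc}$-converges to $h\in C_{od}(X,X)$ if for every nonempty compact $K\subseteq\mathrm{dom}(h)$ and $\epsilon>0$ there is $\lambda_0$ such that for all $\lambda\ge\lambda_0$, $K\subseteq\mathrm{dom}(h_\lambda)$ and $\sup_{x\in K}d(h_\lambda(x),h(x))<\epsilon$. *)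

(* Defs.v *)
From HB Require Import structures.
From mathcomp Require Import all_boot all_order all_algebra.
From mathcomp Require Import all_classical all_reals all_analysis.
Set Implicit Arguments. Unset Strict Implicit. Unset Printing Implicit Defensive.
Import Order.TTheory GRing.Theory Num.Theory.
Local Open Scope classical_set_scope.
Local Open Scope ring_scope.

(* A partial map of X is represented by a domain D : set X together with a
   total function f : X -> X whose values outside D are irrelevant. *)

Definition in_Cod (X : topologicalType) (D : set X) (f : X -> X) : Prop :=
  open D /\ {within D, continuous f}.

Definition in_Gamma (X : topologicalType) (D : set X) (f : X -> X)
    (E : set X) (finv : X -> X) : Prop :=
  [/\ open D, open E, f @` D = E & finv @` E = D] /\
  [/\ (forall x, D x -> finv (f x) = x),
      (forall y, E y -> f (finv y) = y),
      {within D, continuous f} & {within E, continuous finv}].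

Definition tau_cc_cvg (R : realType) (X : metricType R)
    (Dn : nat -> set X) (hn : nat -> X -> X) (D : set X) (h : X -> X) : Prop :=
  forall K : set X, K !=set0 -> compact K -> K `<=` D ->
  forall eps : R, 0 < eps ->
  exists l0 : nat, forall l, (l0 <= l)%N ->
    K `<=` Dn l /\ sup [set mdist (hn l x) (h x) | x in K] < eps.

(* Main.v *)
Require Import Defs.
From HB Require Import structures.
From mathcomp Require Import all_boot all_order all_algebra.
From mathcomp Require Import all_classical all_reals all_analysis.
Import Order.TTheory GRing.Theory Num.Theory.
Local Open Scope classical_set_scope.
Local Open Scope ring_scope.

From mathcomp Require Import lra.

Section Helpers.
Local Set Implicit Arguments. Local Unset Strict Implicit.

Lemma mdist_lip (R : realType) (X : metricType R) (a b a' b' : X) :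
  `|mdist a' b' - mdist a b| <= mdist a a' + mdist b b'.
Proof.
have t1 := metric_triangle a a' b; have t2 := metric_triangle a' b' b.
have t3 := metric_triangle a' a b'; have t4 := metric_triangle a b b'.
rewrite (metric_sym b' b) in t2. rewrite (metric_sym a' a) in t3.
rewrite ler_norml; apply/andP; split; lra.
Qed.

Lemma cont_mdist (R : realType) (X : metricType R) (T : topologicalType)
  (a b : T -> X) : continuous a -> continuous b ->
  continuous (fun t => (mdist (a t) (b t) : R^o)).
Proof.
move=> ca cb t; apply/cvgrPdist_lt => e e0.
have e20 : 0 < e / 2 by rewrite divr_gt0.
have /metricType_numDomainType.cvgrPdist_lt /(_ _ e20) Ha := ca t.
have /metricType_numDomainType.cvgrPdist_lt /(_ _ e20) Hb := cb t.
near=> s.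
rewrite distrC (le_lt_trans (@mdist_lip _ _ (a t) (b t) (a s) (b s)))//.
have h1 : mdist (a t) (a s) < e / 2 by near: s.
have h2 : mdist (b t) (b s) < e / 2 by near: s.
lra.
Unshelve. all: by end_near. Qed.

Lemma bounded_dist (R : realType) (X : metricType R) (A : set X) (a b : X -> X) :
  compact A -> {within A, continuous a} -> {within A, continuous b} ->
  has_ubound [set mdist (a z) (b z) | z in A].
Proof.
move=> cA ca cb.
have hc : {within A, continuous (fun t => (mdist (a t) (b t) : R^o))}.
  exact: (@cont_mdist R X (subspace A) a b ca cb).
have := compact_bounded (continuous_compact hc cA).
rewrite /bounded_near => /pinfty_ex_gt0 [M M0 HM].
exists M => _ [z Az <-]. 
have := HM _ (ex_intro2 _ _ z Az erefl).
move=> /= h; apply: le_trans h; exact: ler_norm.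
Qed.

Lemma closure_ball_sub (R : realType) (X : metricType R) (y : X) (e : R) :
  0 < e -> closure (ball y (e / 2)) `<=` ball y e.
Proof.
move=> e0 z /(_ (ball z (e / 2)) (nbhsx_ballx _ _ _)) [].
  by rewrite divr_gt0.
move=> w [yw /ball_sym zw].
by rewrite (splitr e); apply: ball_triangle yw zw.
Qed.

Lemma cnbhs (R : realType) (X : metricType R)
  (hlc : locally_compact [set: X]) (D : set X) (y : X) :
  open D -> D y ->
  exists K, [/\ compact K, K `<=` D & nbhs y K].
Proof.
move=> oD Dy.
have /nbhs_ballP [e /= e0 sD] : nbhs y D by apply: open_nbhs_nbhs.
have [U nU [cU _]] := hlc y I.
exists (U `&` closure (ball y (e / 2))); split.
- by apply: compact_closedI => //; exact: closed_closure.
- by move=> z [_ /(@closure_ball_sub _ _ y _ e0) /sD].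
- apply: filterI.
    move: nU; rewrite /within /=; apply: filter_app; apply: nearW => z; exact.
  have hb : nbhs y (ball y (e / 2)) by apply: nbhsx_ballx; rewrite divr_gt0.
  exact: (filterS (@subset_closure _ _) hb).
Qed.

Lemma key (R : realType) (X : metricType R)
  (hlc : locally_compact [set: X])
  (Dn : nat -> set X) (fn : nat -> X -> X) (En : nat -> set X) (fninv : nat -> X -> X)
  (hinv : forall l x, Dn l x -> fninv l (fn l x) = x)
  (hcont : forall l, {within En l, continuous (fninv l)})
  (Df : set X) (f : X -> X) (Dg : set X) (g : X -> X)
  (oDg : open Dg) (cg : {within Dg, continuous g})
  (hcf : tau_cc_cvg Dn fn Df f) (hcg : tau_cc_cvg En fninv Dg g) x :
  Df x -> Dg (f x) -> g (f x) = x.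
Proof.
move=> Dfx Dgy; set y := f x in Dgy *.
have [K [cK KD nK]] := cnbhs hlc oDg Dgy.
apply/eqP; rewrite eq_sym; apply/negPn/negP => /negbTE xy.
have := mdist_gt0 x (g y); rewrite xy => d0.
set eps := mdist x (g y).
have e20 : 0 < eps / 2 by rewrite divr_gt0.
have cgy : {for y, continuous g}.
  by move: cg; rewrite continuous_open_subspace // => /(_ y); apply; rewrite inE.
have /metricType_numDomainType.cvgrPdist_lt /(_ _ e20) Hg := cgy.
have Hn : nbhs y (K `&` [set t | mdist (g y) (g t) < eps / 2]) by apply: filterI.
move/nbhs_ballP: Hn => [del /= del0 Hdel].
have [l1 Hl1] := hcg K (ex_intro _ y (nbhs_singleton nK)) cK KD _ e20.
have [l2 Hl2] := hcf [set x] (ex_intro _ x erefl) (@compact_set1 _ x)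
  (fun z (h : [set x] z) => eq_ind_r Df Dfx h) _ del0.
pose l := maxn l1 l2.
have [KE supK] := Hl1 l (leq_maxl _ _).
have [xD supx] := Hl2 l (leq_maxr _ _).
rewrite image_set1 sup1 in supx.
set z := fn l x in supx.
have Kz : K z /\ mdist (g y) (g z) < eps / 2.
  by apply: Hdel; rewrite ballEmdist /= metric_sym.
case: Kz => Kz gz.
have hx : fninv l z = x by apply: hinv; apply: xD.
have ub := bounded_dist cK (continuous_subspaceW KE (hcont l))
  (continuous_subspaceW KD cg).
have dz : mdist (fninv l z) (g z) <= sup [set mdist (fninv l x) (g x) | x in K].
  by apply: ub_le_sup => //; exists z.
rewrite hx in dz.
have := metric_triangle x (g z) (g y); rewrite (metric_sym (g z) (g y)).
rewrite -/eps; lra.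
Qed.

End Helpers.

Theorem mainTheorem11 (R : realType) (X : metricType R)
  (hlc : locally_compact [set: X]) (hsc : @second_countable X)
  (Dn : nat -> set X) (fn : nat -> X -> X) (En : nat -> set X) (fninv : nat -> X -> X)
  (hG : forall l, in_Gamma (Dn l) (fn l) (En l) (fninv l))
  (Df : set X) (f : X -> X) (Dg : set X) (g : X -> X)
  (hf : in_Cod Df f) (hg : in_Cod Dg g)
  (hcf : tau_cc_cvg Dn fn Df f) (hcg : tau_cc_cvg En fninv Dg g)
  (himf : f @` Df `<=` Dg) (himg : g @` Dg `<=` Df) :
  in_Gamma Df f Dg g.

Proof.
have K1 : forall x, Df x -> g (f x) = x.
  move=> x Dx; apply: (@key R X hlc Dn fn En fninv _ _ Df f Dg g _ _ hcf hcg x Dx).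
  - by move=> l; case: (hG l) => _ [].
  - by move=> l; case: (hG l) => _ [].
  - by case: hg.
  - by case: hg.
  - by apply: himf; exists x.
have K2 : forall y, Dg y -> f (g y) = y.
  move=> y Dy; apply: (@key R X hlc En fninv Dn fn _ _ Dg g Df f _ _ hcg hcf y Dy).
  - by move=> l; case: (hG l) => _ [].
  - by move=> l; case: (hG l) => _ [].
  - by case: hf.
  - by case: hf.
  - by apply: himg; exists y.
case: hf => oDf cf; case: hg => oDg cg.
split; split => //.
- apply/seteqP; split; first exact: himf.
  move=> y Dy; exists (g y); last exact: K2.
  by apply: himg; exists y.
- apply/seteqP; split; first exact: himg.
  move=> x Dx; exists (f x); last exact: K1.
  by apply: himf; exists x.
Qed.
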